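(* Let $p$ be a prime and let $G$ be a finite group of order divisible by $p$. Let $P$ be a Sylow $p$-subgroup of $G$ and let $a$ be a non-negative integer such that $a \le \log_p(\exp(\mathbf{Z}(P)))$. Then $k_G(p^a) \ge p^{a-1}$.
   Context: For a finite group $G$, a prime $p$ and a non-negative integer $a$, $k_G(p^a)$ denotes the number of conjugacy classes of $G$ consisting of elements $g$ with $|g|_p = p^a$, where $|g|_p$ is the $p$-part of the order of $g$. $\mathbf{Z}(P)$ is the center of $P$ and $\exp$ denotes the exponent of a group. *)

(* Defs.v *)
From mathcomp Require Import all_boot all_fingroup all_solvable.
Set Implicit Arguments. Unset Strict Implicit. Unset Printing Implicit Defensive.
Local Open Scope group_scope.

(* The p-part of the order is
   constant on a conjugacy class, so we test the representative. *)
Definition kG (gT : finGroupType) (G : {group gT}) (p a : nat) : nat :=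
  #|[set C in classes G | (#[repr C]`_p == p ^ a)%N]|.

(* Main.v *)
Require Import Defs.
From mathcomp Require Import all_boot all_fingroup all_solvable.
From mathcomp Require Import zify.
Set Implicit Arguments. Unset Strict Implicit. Unset Printing Implicit Defensive.
Local Open Scope group_scope.

Lemma binom_step (p q s : nat) : forall k, exists t, ((1 + q * s) ^ k = 1 + k * q * s + q * q * t)%N.
Proof.
elim=> [|k [t IH]]; first by exists 0%N; rewrite expn0 !mul0n !muln0.
exists (t + k * s * s + q * t * s)%N; rewrite expnS IH. nia.
Qed.

Lemma sub_step (p q s : nat) : (p %| q)%N -> exists t, ((1 + q * s) ^ p = 1 + p * q * t)%N.
Proof.
case/dvdnP=> r ->; have [t ->] := @binom_step p (r * p) s p.
exists (s + r * t)%N. nia.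
Qed.

Lemma NT (p v : nat) : prime p -> (v %% p = 1)%N -> forall n, exists t, (v ^ (p ^ n) = 1 + p ^ n.+1 * t)%N.
Proof.
move=> pp vp; elim=> [|n [t IH]].
  exists (v %/ p); rewrite expn0 expn1 {1}(divn_eq v p) vp expn1. lia.
have [t' Ht'] := @sub_step p (p ^ n.+1)%N t (dvdn_exp2l p (ltn0Sn n)).
exists t'; rewrite (expnSr p n.+1) (expnSr p n) expnM IH Ht' !expnS. nia.
Qed.

Lemma centJ (gT : finGroupType) (z x : gT) : z ^ x = z -> x \in 'C[z].
Proof. by move=> H; apply/cent1P; rewrite /commute [RHS]conjgC H. Qed.

Lemma Jcent (gT : finGroupType) (z x : gT) : x \in 'C[z] -> z ^ x = z.
Proof. by move/cent1P=> c; rewrite conjgE ?mulgA -?mulgA -c mulKg. Qed.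

Lemma conj_lem (gT : finGroupType) (z w c : gT) : (z ^ c^-1) ^ w = z ^ c^-1 -> z ^ (w ^ c) = z.
Proof. by move=> H; rewrite (conjgE w c) !conjgM H conjgKV. Qed.

Lemma conj_iter (gT : finGroupType) (z g : gT) v : z ^ g = z ^+ v ->
  forall n, z ^ (g ^+ n) = z ^+ (v ^ n)%N.
Proof.
move=> H; elim=> [|n IH]; first by rewrite expg0 conjg1 expn0 expg1.
by rewrite expgSr conjgM IH conjXg H -expgnA expnS mulnC.
Qed.

Lemma key (gT : finGroupType) (G P : {group gT}) p a (z g : gT) i j :
  prime p -> p.-Sylow(G) P -> z \in 'Z(P) -> #[z] = (p ^ a.+1)%N -> g \in G ->
  (z ^+ (1 + i * p)%N) ^ g = z ^+ (1 + j * p)%N -> g \in 'C[z].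
Proof.
move=> pp sylP zZ oz gG Hij.
have [zP cPz] := setIP zZ.
have sPC : P \subset 'C[z] by rewrite sub_cent1.
have cop : coprime #[z] (1 + i * p)%N.
  rewrite oz coprime_pexpl // prime_coprime // dvdn_addl ?dvdn_mull //.
  by rewrite dvdn1; case: eqP pp => // ->.
have gen : <[z ^+ (1 + i * p)%N]> = <[z]>.
  by have := generator_coprime z (1 + i * p)%N; rewrite cop /generator => /eqP <-.
have zg_in : z ^ g \in <[z]>.
  have : z \in <[z ^+ (1 + i * p)%N]> by rewrite gen cycle_id.
  case/cycleP=> r zr; by rewrite {1}zr conjXg Hij !groupX ?cycle_id.
have [v zgv] := cycleP _ _ zg_in.
have vmod : (v %% p = 1)%N.
  have : z ^+ (v * (1 + i * p))%N == z ^+ (1 + j * p)%N.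
    by rewrite expgnA -zgv -conjXg Hij.
  rewrite eq_expg_mod_order oz => /eqP /(congr1 (modn^~ p)).
  rewrite !modn_dvdm ?dvdn_exp //.
  rewrite mulnDr muln1 mulnA addnC modnMDl [(1 + _)%N]addnC modnMDl (modn_small (prime_gt1 pp)) => -> //.
have [t Ht] := NT pp vmod a.
have cgp : g ^+ (p ^ a)%N \in 'C[z].
  apply: centJ; rewrite (conj_iter zgv) Ht expgD expg1 expgnA -oz expg_order.
  by rewrite expg1n mulg1.
have ch : g.`_p^' \in 'C[z].
  have h1 : (g ^+ (p ^ a)%N).`_p^' \in 'C[z].
    by apply: (subsetP _ _ (cycle_constt _ _)); rewrite cycle_subG.
  rewrite consttX in h1.
  have cop2 : coprime #[g.`_p^'] (p ^ a)%N.
    rewrite coprime_sym; apply: (@pnat_coprime p); first by rewrite pnatX pnat_id.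
    exact: p_elt_constt.
  have := generator_coprime (g.`_p^') (p ^ a)%N; rewrite cop2 /generator => /eqP gen2.
  by rewrite -cycle_subG gen2 cycle_subG.
have gN : g \in 'N(<[z]>).
  by rewrite inE -cycleJ cycle_subG.
have yN : g.`_p \in 'N_G(<[z]>).
  by apply: (subsetP _ _ (cycle_constt _ _)); rewrite cycle_subG inE gG gN.
have sPN : P \subset 'N_G(<[z]>).
  rewrite subsetI (pHall_sub sylP) /=; apply: subset_trans sPC _.
  by rewrite -cent_cycle cent_sub.
have sylN : p.-Sylow('N_G(<[z]>)) P.
  exact: pHall_subl sPN (subsetIl _ _) sylP.
have syN : <[g.`_p]> \subset 'N_G(<[z]>) by rewrite cycle_subG.
have [c cN sy] := Sylow_subJ sylN syN (p_elt_constt p g).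
have cy : g.`_p \in 'C[z].
  have yPc : g.`_p \in P :^ c by rewrite -cycle_subG.
  have wP : g.`_p ^ c^-1 \in P by rewrite -mem_conjg.
  have ycw : g.`_p = (g.`_p ^ c^-1) ^ c by rewrite conjgKV.
  have zc : z ^ c^-1 \in <[z]>.
    by case/setIP: cN => _ cN; rewrite memJ_norm ?cycle_id // groupV.
  have wC : g.`_p ^ c^-1 \in 'C[z ^ c^-1].
    have : g.`_p ^ c^-1 \in 'C(<[z]>) by rewrite cent_cycle (subsetP sPC).
    by move/centP=> H; apply/cent1P; exact: H.
  apply: centJ; rewrite ycw; apply: conj_lem; exact: Jcent wC.
by rewrite -(consttC p g) groupM.
Qed.

Theorem theorem1p1 (gT : finGroupType) (G P : {group gT}) (p a : nat) :
  prime p -> (p %| #|G|)%N -> P \in 'Syl_p(G) ->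
  (a <= logn p (exponent 'Z(P)))%N ->
  (p ^ a <= kG G p a * p)%N.
Proof.
move=> pp _ sylP ha; rewrite inE in sylP.
have [z0 z0Z ez] := exponent_witness (abelian_nil (center_abelian P)).
have pz0 : p.-elt z0.
  apply: mem_p_elt z0Z; apply: pgroupS (center_sub P) (pHall_pgroup sylP).
have [e oz0] := p_natP pz0.
rewrite ez oz0 pfactorK // in ha.
have [z zZ oz] : exists2 z, z \in 'Z(P) & #[z] = (p ^ a)%N.
  exists (z0 ^+ (p ^ (e - a))%N); first by rewrite groupX.
  rewrite orderXdiv oz0 ?dvdn_exp2l ?leq_subr // -expnB ?prime_gt0 // ?leq_subr //.
  by rewrite subKn.
clear z0Z ez pz0 oz0.
case: a ha oz => [|a] ha oz.
  rewrite expn0 muln_gt0 (prime_gt0 pp) andbT /kG card_gt0; apply/set0Pn; exists (1 ^: G).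
  rewrite inE mem_classes //= class1G repr_group order1.
  by rewrite partn1 expn0.
have zG : z \in G by rewrite (subsetP (pHall_sub sylP)) // (subsetP (center_sub P)).
have ordx : forall i : nat, #[z ^+ (1 + i * p)%N] = (p ^ a.+1)%N.
  move=> i; rewrite orderXgcd oz.
  have cop : coprime (p ^ a.+1)%N (1 + i * p)%N.
    rewrite coprime_pexpl // prime_coprime // dvdn_addl ?dvdn_mull //.
    by rewrite dvdn1; case: eqP pp => // ->.
  by rewrite (eqP cop) divn1.
have bnd : forall i : 'I_(p ^ a), (1 + i * p < p ^ a.+1)%N.
  move=> i; rewrite expnSr; have := ltn_ord i; have := prime_gt1 pp; nia.
pose f := fun i : 'I_(p ^ a) => (z ^+ (1 + i * p)%N) ^: G.
have finj : injective f.
  move=> i j eqf.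
  have : z ^+ (1 + j * p)%N \in f i by rewrite eqf class_refl.
  case/imsetP=> g gG Hg.
  have cg := key pp sylP zZ oz gG (esym Hg).
  move: Hg; rewrite conjXg (Jcent cg) => /eqP.
  rewrite eq_expg_mod_order oz !modn_small ?bnd // => /eqP H.
  apply/val_inj => /=; have := prime_gt1 pp; nia.
have fsub : f @: setT \subset [set C in classes G | (#[repr C]`_p == p ^ a.+1)%N].
  apply/subsetP=> C /imsetP[i _ ->]; rewrite inE mem_classes ?groupX //=.
  have := mem_repr _ (class_refl G (z ^+ (1 + i * p)%N)).
  case/imsetP=> g _ ->; rewrite orderJ ordx part_pnat_id //.
  by rewrite pnatX pnat_id.
rewrite expnSr leq_mul2r; apply/orP; right.
have := subset_leq_card fsub; rewrite card_imset // cardsT card_ord.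
by [].
Qed.
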